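(* Let $\varepsilon\in(0,\frac12)$. For all sufficiently large $n$ and all $k\le n$, $$|\mathsf{FewBranchHSW}^n_k|\le\exp\big(8n^{1/2-\varepsilon}\log n\big)\,\mu^k .$$
   Context: On $\mathbb{Z}^2$ with connective constant $\mu$, $\mathsf{HSW}_k$ denotes half-space walks of length $k$ (self-avoiding, $\gamma_0=O$, $y(\gamma_t)>0$ for $t>0$). Branch decomposition of $\gamma\in\mathsf{HSW}_k$: set $a_0=0$; for $i\ge1$ odd let $a_i$ be the largest $t\in[a_{i-1},k]$ with $y(\gamma_t)=\max_{s\in[a_{i-1},k]}y(\gamma_s)$, and for $i\ge2$ even let $a_i$ be the largest $t\in[a_{i-1},k]$ with $y(\gamma_t)=\min_{s\in[a_{i-1},k]}y(\gamma_s)$; stop at the first $r$ with $a_r=k$. The subwalks $\gamma_{[a_{i},a_{i+1}]}$, $0\le i<r$, are the branches of $\gamma$, and $r$ is its number of branches. $\mathsf{FewBranchHSW}^n_k$ is the set of $\gamma\in\mathsf{HSW}_k$ with fewer than $7n^{1/2-\varepsilon}$ branches. *)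

(* Defs.v *)
From Stdlib Require Import Reals ZArith List.
Import ListNotations.
Open Scope R_scope.

Definition point := (Z * Z)%type.
Definition yc (p : point) : Z := snd p.

Definition adj (p q : point) : Prop :=
  (Z.abs (fst p - fst q) + Z.abs (snd p - snd q))%Z = 1%Z.

(* t-th vertex gamma_t of a walk given as the list [gamma_0; ...; gamma_k] *)
Definition pt (g : list point) (t : nat) : point := nth t g (0%Z, 0%Z).

Definition SAW (k : nat) (g : list point) : Prop :=
  length g = S k /\ pt g 0 = (0%Z, 0%Z) /\ NoDup g /\
  (forall t, (t < k)%nat -> adj (pt g t) (pt g (S t))).

Definition HSW (k : nat) (g : list point) : Prop :=
  SAW k g /\ (forall t, (0 < t <= k)%nat -> (0 < yc (pt g t))%Z).

Definition last_argmax (g : list point) (k b a : nat) : Prop :=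
  (b <= a <= k)%nat /\
  (forall s, (b <= s <= k)%nat -> (yc (pt g s) <= yc (pt g a))%Z) /\
  (forall s, (a < s <= k)%nat -> (yc (pt g s) < yc (pt g a))%Z).

Definition last_argmin (g : list point) (k b a : nat) : Prop :=
  (b <= a <= k)%nat /\
  (forall s, (b <= s <= k)%nat -> (yc (pt g a) <= yc (pt g s))%Z) /\
  (forall s, (a < s <= k)%nat -> (yc (pt g a) < yc (pt g s))%Z).

Definition num_branches (g : list point) (k r : nat) : Prop :=
  exists a : nat -> nat,
    a 0%nat = 0%nat /\
    (forall i, (1 <= i <= r)%nat ->
       if Nat.odd i then last_argmax g k (a (pred i)) (a i)
       else last_argmin g k (a (pred i)) (a i)) /\
    a r = k /\
    (forall i, (i < r)%nat -> a i <> k).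

Definition FewBranchHSW (eps : R) (n k : nat) (g : list point) : Prop :=
  HSW k g /\ exists r, num_branches g k r /\
    INR r < 7 * Rpower (INR n) (1/2 - eps).

Definition IsCard (P : list point -> Prop) (m : nat) : Prop :=
  exists L, NoDup L /\ (forall x, In x L <-> P x) /\ length L = m.

(* Main.v *)
Require Import Defs.
From Stdlib Require Import Reals ZArith List Lia Lra ClassicalEpsilon.
Import ListNotations.
Open Scope R_scope.

Definition Bnd {X : Type} (P : X -> Prop) (B : R) : Prop :=
  forall L, NoDup L -> (forall x, In x L -> P x) -> INR (length L) <= B.

Lemma Bnd_nonneg {X} (P : X -> Prop) B : Bnd P B -> 0 <= B.
Proof. intro H. apply (H nil); [constructor | simpl; tauto]. Qed.

Lemma Bnd_weaken {X} (P : X -> Prop) B B' : Bnd P B -> B <= B' -> Bnd P B'.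
Proof. intros H Hle L H1 H2. specialize (H L H1 H2). lra. Qed.

Lemma Bnd_sub {X} (P Q : X -> Prop) B : (forall x, P x -> Q x) -> Bnd Q B -> Bnd P B.
Proof. intros HPQ H L H1 H2. apply H; auto. Qed.

Lemma Bnd_empty {X} (P : X -> Prop) : (forall x, ~ P x) -> Bnd P 0.
Proof. intros H L _ H2. destruct L as [|x L]. simpl; lra.
  exfalso; apply (H x), H2; simpl; auto. Qed.

Lemma Bnd_single {X} (P : X -> Prop) x0 : (forall x, P x -> x = x0) -> Bnd P 1.
Proof. intros H L H1 H2.
  assert (length L <= length [x0])%nat.
  { apply NoDup_incl_length; auto. intros y Hy. rewrite (H y (H2 y Hy)). simpl; auto. }
  simpl in H0. apply le_INR in H0. simpl in H0. exact H0. Qed.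

Lemma Bnd_lt (M : nat) (P : nat -> Prop) : (forall r, P r -> (r < M)%nat) -> Bnd P (INR M).
Proof. intros H L H1 H2. apply le_INR.
  rewrite <- (length_seq M 0). apply NoDup_incl_length; auto.
  intros y Hy. apply in_seq. specialize (H y (H2 y Hy)). lia. Qed.

Lemma NoDup_map_on {X Y} (f : X -> Y) (L : list X) :
  NoDup L -> (forall x y, In x L -> In y L -> f x = f y -> x = y) -> NoDup (map f L).
Proof.
  induction L as [|a L IH]; intros H Hi; simpl. constructor.
  inversion H; subst. constructor.
  - intro Hin. apply in_map_iff in Hin. destruct Hin as [z [Hz1 Hz2]].
    assert (z = a) by (apply Hi; simpl; auto). subst. auto.
  - apply IH; auto. intros; apply Hi; simpl; auto.
Qed.

Lemma Bnd_inj {X Y} (P : X -> Prop) (Q : Y -> Prop) (f : X -> Y) B :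
  (forall x, P x -> Q (f x)) -> (forall x y, P x -> P y -> f x = f y -> x = y) ->
  Bnd Q B -> Bnd P B.
Proof.
  intros HQ Hi H L H1 H2. rewrite <- (length_map f L). apply H.
  - apply NoDup_map_on; auto.
  - intros y Hy. apply in_map_iff in Hy. destruct Hy as [z [<- Hz]]. auto.
Qed.

Lemma Bnd_fiber_aux {X Y} (P0 : X -> Prop) (Rl : X -> Y -> Prop) B2 :
  0 <= B2 ->
  (forall y, Bnd (fun x => P0 x /\ Rl x y) B2) ->
  forall n (L : list X) (P : X -> Prop) B1, (length L <= n)%nat ->
  (forall x, P x -> P0 x) ->
  (forall x, P x -> exists y, Rl x y) ->
  Bnd (fun y => exists x, P x /\ Rl x y) B1 ->
  NoDup L -> (forall x, In x L -> P x) -> INR (length L) <= B1 * B2.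
Proof.
  intros HB2 Hf n. induction n as [|n IH]; intros L P B1 Hlen HP0 Hex Him H1 H2.
  - destruct L; simpl in Hlen; [|lia]. simpl.
    apply Rmult_le_pos; auto. apply (Bnd_nonneg _ _ Him).
  - destruct L as [|x0 L'].
    { simpl. apply Rmult_le_pos; auto. apply (Bnd_nonneg _ _ Him). }
    destruct (Hex x0 (H2 x0 (or_introl eq_refl))) as [y0 Hy0].
    set (p := fun x => if excluded_middle_informative (Rl x y0) then true else false).
    rewrite <- (filter_length p).
    assert (E2 : filter (fun x => negb (p x)) (x0 :: L') = filter (fun x => negb (p x)) L').
    { simpl. unfold p at 1. destruct (excluded_middle_informative (Rl x0 y0)); [reflexivity|contradiction]. }
    rewrite E2, plus_INR.
    assert (A1 : INR (length (filter p (x0 :: L'))) <= B2).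
    { apply (Hf y0). apply NoDup_filter; auto.
      intros x Hx. apply filter_In in Hx. destruct Hx as [Hx Hpx]. split; [apply HP0, H2; auto|].
      unfold p in Hpx. destruct (excluded_middle_informative (Rl x y0)); auto; discriminate. }
    assert (A2 : INR (length (filter (fun x => negb (p x)) L')) <= (B1 - 1) * B2).
    { apply (IH _ (fun x => P x /\ ~ Rl x y0)).
      - eapply Nat.le_trans. apply filter_length_le. simpl in Hlen; lia.
      - intros x [Hx _]; auto.
      - intros x [Hx _]; auto.
      - intros LY HY1 HY2.
        assert (Hn : ~ In y0 LY).
        { intro Hin. destruct (HY2 y0 Hin) as [x [[_ Hx] Hx']]. contradiction. }
        assert (INR (length (y0 :: LY)) <= B1).
        { apply Him. constructor; auto.
          intros y [<-|Hy]. exists x0; split; auto. apply H2; simpl; auto.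
          destruct (HY2 y Hy) as [x [[Hx _] Hx']]. eauto. }
        simpl length in H. rewrite S_INR in H. lra.
      - apply NoDup_filter. inversion H1; auto.
      - intros x Hx. apply filter_In in Hx. destruct Hx as [Hx Hpx]. split. apply H2; simpl; auto.
        unfold p in Hpx. destruct (excluded_middle_informative (Rl x y0)); auto; discriminate. }
    lra.
Qed.

Lemma Bnd_fiber {X Y} (P : X -> Prop) (Rl : X -> Y -> Prop) B1 B2 :
  0 <= B2 ->
  (forall x, P x -> exists y, Rl x y) ->
  Bnd (fun y => exists x, P x /\ Rl x y) B1 ->
  (forall y, Bnd (fun x => P x /\ Rl x y) B2) ->
  Bnd P (B1 * B2).
Proof.
  intros HB2 Hex Him Hf L H1 H2.
  apply (Bnd_fiber_aux P Rl B2 HB2 Hf (length L) L P B1); auto.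
Qed.

Definition mk (f : nat -> point) (n : nat) : list point := map f (seq 0 (S n)).

Lemma mk_length f n : length (mk f n) = S n.
Proof. unfold mk. rewrite length_map, length_seq. reflexivity. Qed.

Lemma pt_mk f n t : (t <= n)%nat -> pt (mk f n) t = f t.
Proof. intro H. unfold pt, mk. erewrite nth_indep with (d' := f 0%nat).
  rewrite map_nth, seq_nth; [reflexivity| lia]. rewrite length_map, length_seq; lia. Qed.

Lemma walk_ext g h : length g = length h -> (forall t, (t < length g)%nat -> pt g t = pt h t) -> g = h.
Proof. intros H1 H2. apply (nth_ext _ _ (0%Z,0%Z) (0%Z,0%Z)); auto. Qed.

Lemma NoDup_pt g : NoDup g <-> (forall i j, (i < length g)%nat -> (j < length g)%nat -> pt g i = pt g j -> i = j).
Proof. apply NoDup_nth. Qed.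

Lemma mk_NoDup f n : (forall i j, (i <= n)%nat -> (j <= n)%nat -> f i = f j -> i = j) -> NoDup (mk f n).
Proof. intro H. apply NoDup_pt. rewrite mk_length. intros i j Hi Hj.
  rewrite !pt_mk by lia. apply H; lia. Qed.

Definition padd (p q : point) : point := (fst p + fst q, snd p + snd q)%Z.
Definition refl (e p : point) : point := (fst p - fst e, snd e - snd p)%Z.

Lemma adj_padd p q e : adj p q -> adj (padd p e) (padd q e).
Proof. unfold adj, padd; simpl. intro H.
  replace (fst p + fst e - (fst q + fst e))%Z with (fst p - fst q)%Z by ring.
  replace (snd p + snd e - (snd q + snd e))%Z with (snd p - snd q)%Z by ring. exact H. Qed.

Lemma adj_refl p q e : adj p q -> adj (refl e p) (refl e q).
Proof. unfold adj, refl; simpl. intro H.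
  replace (fst p - fst e - (fst q - fst e))%Z with (fst p - fst q)%Z by ring.
  replace (snd e - snd p - (snd e - snd q))%Z with (- (snd p - snd q))%Z by ring.
  rewrite Z.abs_opp. exact H. Qed.

Lemma padd_inj p q e : padd p e = padd q e -> p = q.
Proof. destruct p, q; unfold padd; simpl; intro H; injection H; intros; f_equal; lia. Qed.

Lemma refl_inj p q e : refl e p = refl e q -> p = q.
Proof. destruct p, q; unfold refl; simpl; intro H; injection H; intros; f_equal; lia. Qed.

Definition Bridge (m : nat) (g : list point) : Prop :=
  HSW m g /\ forall t, (t <= m)%nat -> (yc (pt g t) <= yc (pt g m))%Z.

Definition jn (m : nat) (g h : list point) (p : nat) : list point :=
  mk (fun t => if Nat.leb t m then pt g t else padd (pt h (t - m)) (pt g m)) (m + p).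

Lemma yc_padd p e : yc (padd p e) = (yc p + yc e)%Z.
Proof. reflexivity. Qed.

Lemma Bridge_y0 m g : Bridge m g -> yc (pt g 0) = 0%Z.
Proof. intros [[[_ [H _]] _] _]. rewrite H. reflexivity. Qed.

Lemma jn_Bridge m p g h : Bridge m g -> Bridge p h -> Bridge (m + p) (jn m g h p).
Proof.
  intros Hg Hh. pose proof Hg as [[[Lg [Og [Ng Ag]]] Yg] Mg].
  pose proof Hh as [[[Lh [Oh [Nh Ah]]] Yh] Mh].
  assert (Y0 : (0 <= yc (pt g m))%Z).
  { destruct m. rewrite Og; simpl; lia. specialize (Yg (S m)). lia. }
  assert (Hpt : forall t, (t <= m + p)%nat -> pt (jn m g h p) t =
      if Nat.leb t m then pt g t else padd (pt h (t - m)) (pt g m)).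
  { intros t Ht. unfold jn. rewrite pt_mk; auto. }
  split; [split; [split; [|split; [|split]]|] |].
  - apply mk_length.
  - rewrite Hpt by lia. simpl. exact Og.
  - apply mk_NoDup. intros i j Hi Hj.
    destruct (Nat.leb i m) eqn:Ei; destruct (Nat.leb j m) eqn:Ej;
      apply Nat.leb_le in Ei || apply Nat.leb_gt in Ei;
      apply Nat.leb_le in Ej || apply Nat.leb_gt in Ej; intro E.
    + rewrite NoDup_pt in Ng. apply Ng; auto; lia.
    + exfalso. assert (H1 := Mg i Ei). assert (H2 := Yh (j - m)%nat ltac:(lia)).
      apply (f_equal yc) in E. rewrite yc_padd in E. lia.
    + exfalso. assert (H1 := Mg j Ej). assert (H2 := Yh (i - m)%nat ltac:(lia)).
      apply (f_equal yc) in E. rewrite yc_padd in E. lia.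
    + apply padd_inj in E. rewrite NoDup_pt in Nh. assert (i - m = j - m)%nat by (apply Nh; auto; lia). lia.
  - intros t Ht. rewrite !Hpt by lia.
    destruct (Nat.leb t m) eqn:Ei; destruct (Nat.leb (S t) m) eqn:Ej;
      apply Nat.leb_le in Ei || apply Nat.leb_gt in Ei;
      apply Nat.leb_le in Ej || apply Nat.leb_gt in Ej.
    + apply Ag; lia.
    + assert (t = m) by lia. subst t. replace (S m - m)%nat with 1%nat by lia.
      replace (pt g m) with (padd (pt h 0) (pt g m)) at 1 by (rewrite Oh; destruct (pt g m); reflexivity).
      apply adj_padd. apply Ah. lia.
    + lia.
    + replace (S t - m)%nat with (S (t - m)) by lia. apply adj_padd, Ah. lia.
  - intros t Ht. rewrite Hpt by lia.
    destruct (Nat.leb t m) eqn:Ei; [apply Nat.leb_le in Ei | apply Nat.leb_gt in Ei].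
    + apply Yg; lia.
    + rewrite yc_padd. assert (H2 := Yh (t - m)%nat ltac:(lia)). lia.
  - intros t Ht. rewrite !Hpt by lia.
    destruct (Nat.leb t m) eqn:Ei; destruct (Nat.leb (m + p) m) eqn:Ej;
      apply Nat.leb_le in Ei || apply Nat.leb_gt in Ei;
      apply Nat.leb_le in Ej || apply Nat.leb_gt in Ej.
    + replace (m + p)%nat with m by lia. apply Mg; auto.
    + rewrite yc_padd. assert (H2 := Yh (m + p - m)%nat ltac:(lia)). assert (H1 := Mg t Ei). lia.
    + lia.
    + rewrite !yc_padd. replace (m + p - m)%nat with p by lia. assert (H2 := Mh (t - m)%nat ltac:(lia)). lia.
Qed.

Lemma jn_inj m p g h g' h' : Bridge m g -> Bridge m g' -> Bridge p h -> Bridge p h' ->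
  jn m g h p = jn m g' h' p -> g = g' /\ h = h'.
Proof.
  intros Hg Hg' Hh Hh' E.
  assert (Hpt : forall t, (t <= m + p)%nat -> pt (jn m g h p) t = pt (jn m g' h' p) t) by (intros; rewrite E; auto).
  unfold jn in Hpt.
  assert (G : g = g').
  { apply walk_ext. destruct Hg as [[[L1 _] _] _]; destruct Hg' as [[[L2 _] _] _]; congruence.
    intros t Ht. destruct Hg as [[[L1 _] _] _]. specialize (Hpt t ltac:(lia)). rewrite !pt_mk in Hpt by lia.
    replace (Nat.leb t m) with true in Hpt by (symmetry; apply Nat.leb_le; lia). exact Hpt. }
  subst g'. split; auto.
  apply walk_ext. destruct Hh as [[[L1 _] _] _]; destruct Hh' as [[[L2 _] _] _]; congruence.
  intros t Ht. destruct Hh as [[[L1 [O1 _]] _] _]. destruct Hh' as [[[L2 [O2 _]] _] _].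
  destruct t. rewrite O1, O2; auto.
  specialize (Hpt (m + S t)%nat ltac:(lia)). rewrite !pt_mk in Hpt by lia.
  replace (Nat.leb (m + S t) m) with false in Hpt by (symmetry; apply Nat.leb_gt; lia).
  replace (m + S t - m)%nat with (S t) in Hpt by lia. apply padd_inj in Hpt. exact Hpt.
Qed.

Lemma NoDup_list_prod {A B} (l1 : list A) (l2 : list B) : NoDup l1 -> NoDup l2 -> NoDup (list_prod l1 l2).
Proof.
  induction l1 as [|a l IH]; intros H1 H2; simpl. constructor.
  inversion H1; subst. apply NoDup_app.
  - apply NoDup_map_on; auto. intros x y _ _ E; injection E; auto.
  - apply IH; auto.
  - intros [x y] Hx Hy. apply in_map_iff in Hx. destruct Hx as [z [E _]]. injection E; intros; subst.
    apply in_prod_iff in Hy. tauto.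
Qed.

Lemma Bridge0 : Bridge 0 [(0%Z,0%Z)].
Proof. split; [split; [split; [|split; [|split]]|]|].
  - reflexivity. - reflexivity. - constructor; [simpl; tauto| constructor].
  - intros; lia. - intros; lia. - intros t Ht. replace t with 0%nat by lia. lia. Qed.

Lemma pow_list m (Lb : list (list point)) : NoDup Lb -> (forall b, In b Lb -> Bridge m b) ->
  forall j, exists Lj, NoDup Lj /\ (forall b, In b Lj -> Bridge (j * m) b) /\ length Lj = (length Lb ^ j)%nat.
Proof.
  intros H1 H2 j. induction j as [|j IH].
  - exists [[(0%Z,0%Z)]]. split; [constructor; [simpl; tauto|constructor]|split; auto].
    intros b [<-|[]]. apply Bridge0.
  - destruct IH as [Lj [N1 [B1 E1]]].
    exists (map (fun pr => jn m (fst pr) (snd pr) (j * m)) (list_prod Lb Lj)).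
    split; [|split].
    + apply NoDup_map_on. apply NoDup_list_prod; auto.
      intros [g h] [g' h'] Hx Hy E. apply in_prod_iff in Hx, Hy. simpl in E.
      destruct (jn_inj m (j*m) g h g' h'); try tauto; subst; auto.
      apply H2; tauto. apply H2; tauto. apply B1; tauto. apply B1; tauto.
    + intros b Hb. apply in_map_iff in Hb. destruct Hb as [[g h] [<- Hgh]]. apply in_prod_iff in Hgh.
      simpl. apply jn_Bridge; [apply H2|apply B1]; tauto.
    + rewrite length_map, length_prod, E1. simpl. reflexivity.
Qed.

Lemma Bridge_SAW m g : Bridge m g -> SAW m g.
Proof. intros [[H _] _]; exact H. Qed.

Lemma Rpower_pos x y : 0 < Rpower x y.
Proof. unfold Rpower. apply exp_pos. Qed.

Lemma mu_nonneg (c : nat -> nat) mu : Un_cv (fun n => Rpower (INR (c n)) (/ INR n)) mu -> 0 <= mu.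
Proof. intro H. destruct (Rle_lt_dec 0 mu) as [|Hl]; auto.
  destruct (H (- mu)) as [N HN]. lra. specialize (HN N (le_n N)). unfold R_dist in HN.
  assert (Hp := Rpower_pos (INR (c N)) (/ INR N)). apply Rabs_def2 in HN. lra. Qed.

Lemma ln_le' x y : 0 < x -> x <= y -> ln x <= ln y.
Proof. intros H1 [H2|H2]. left; apply ln_increasing; auto. subst; lra. Qed.

Lemma exp_le' x y : x <= y -> exp x <= exp y.
Proof. intros [H|H]. left; apply exp_increasing; auto. subst; lra. Qed.

Lemma bridge_bound (c : nat -> nat) (Hc : forall n, IsCard (SAW n) (c n)) mu
  (Hmu : Un_cv (fun n => Rpower (INR (c n)) (/ INR n)) mu) m :
  (1 <= m)%nat -> Bnd (Bridge m) (mu ^ m).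
Proof.
  intros Hm Lb H1 H2. set (l := length Lb).
  assert (Hmu0 := mu_nonneg c mu Hmu).
  assert (Hc2 : forall j, (l ^ j <= c (j * m))%nat).
  { intro j. destruct (pow_list m Lb H1 H2 j) as [Lj [N1 [B1 E1]]].
    destruct (Hc (j * m)%nat) as [Lc [Nc [Ic Ec]]]. unfold l; rewrite <- E1, <- Ec.
    apply NoDup_incl_length; auto. intros b Hb. apply Ic, Bridge_SAW, B1, Hb. }
  destruct (Nat.eq_dec l 0) as [El|El].
  { rewrite El; simpl. apply pow_le; auto. }
  assert (Hl : 0 < INR l) by (apply lt_0_INR; lia).
  assert (Hmr : 0 < INR m) by (apply lt_0_INR; lia).
  assert (Key : Rpower (INR l) (/ INR m) <= mu).
  { destruct (Rle_lt_dec (Rpower (INR l) (/ INR m)) mu) as [|Hlt]; auto. exfalso.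
    destruct (Hmu (Rpower (INR l) (/ INR m) - mu)) as [N HN]. lra.
    specialize (HN (S N * m)%nat ltac:(nia)). unfold R_dist in HN. apply Rabs_def2 in HN.
    destruct HN as [HN _].
    assert (Rpower (INR l) (/ INR m) <= Rpower (INR (c (S N * m)%nat)) (/ INR (S N * m))); [|lra].
    unfold Rpower. apply exp_le'.
    assert (Hj : 0 < INR (S N)) by (apply lt_0_INR; lia).
    assert (Hcl : INR l ^ S N <= INR (c (S N * m)%nat)).
    { rewrite <- pow_INR. apply le_INR. apply Hc2. }
    assert (Hlp : 0 < INR l ^ S N) by (apply pow_lt; auto).
    apply ln_le' in Hcl; auto. rewrite ln_pow in Hcl; auto.
    rewrite mult_INR. rewrite Rinv_mult.
    assert (0 <= / INR (S N) * / INR m) by (apply Rmult_le_pos; left; apply Rinv_0_lt_compat; auto).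
    apply Rmult_le_compat_l with (r := / INR (S N) * / INR m) in Hcl; auto.
    replace (/ INR (S N) * / INR m * (INR (S N) * ln (INR l))) with (/ INR m * ln (INR l)) in Hcl
      by (field; lra). lra. }
  fold l.
  replace (INR l) with (Rpower (Rpower (INR l) (/ INR m)) (INR m)).
  rewrite Rpower_pow by apply Rpower_pos. apply pow_incr. split; auto. left; apply Rpower_pos.
  rewrite Rpower_mult. rewrite Rinv_l by lra. apply Rpower_1; auto.
Qed.

Definition rest (g : list point) (m k : nat) : list point :=
  mk (fun t => refl (pt g m) (pt g (m + t))) (k - m).

Lemma pt_rest g m k t : (t <= k - m)%nat -> pt (rest g m k) t = refl (pt g m) (pt g (m + t)).
Proof. intro; unfold rest; rewrite pt_mk; auto. Qed.

Lemma yc_refl e p : yc (refl e p) = (yc e - yc p)%Z.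
Proof. reflexivity. Qed.

Lemma min_to_max g m k b c : (m <= b)%nat -> last_argmin g k b c ->
  last_argmax (rest g m k) (k - m) (b - m) (c - m).
Proof.
  intros Hb [H1 [H2 H3]]. split; [lia|split].
  - intros s Hs. rewrite !pt_rest by lia. rewrite !yc_refl. replace (m + (c - m))%nat with c by lia.
    specialize (H2 (m + s)%nat ltac:(lia)). lia.
  - intros s Hs. rewrite !pt_rest by lia. rewrite !yc_refl. replace (m + (c - m))%nat with c by lia.
    specialize (H3 (m + s)%nat ltac:(lia)). lia.
Qed.

Lemma max_to_min g m k b c : (m <= b)%nat -> last_argmax g k b c ->
  last_argmin (rest g m k) (k - m) (b - m) (c - m).
Proof.
  intros Hb [H1 [H2 H3]]. split; [lia|split].
  - intros s Hs. rewrite !pt_rest by lia. rewrite !yc_refl. replace (m + (c - m))%nat with c by lia.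
    specialize (H2 (m + s)%nat ltac:(lia)). lia.
  - intros s Hs. rewrite !pt_rest by lia. rewrite !yc_refl. replace (m + (c - m))%nat with c by lia.
    specialize (H3 (m + s)%nat ltac:(lia)). lia.
Qed.

Definition Step (k r' : nat) (g : list point) (m : nat) : Prop :=
  (1 <= m <= k)%nat /\ Bridge m (mk (pt g) m) /\ HSW (k - m) (rest g m k) /\
  num_branches (rest g m k) (k - m) r'.

Lemma branch_step k r' g : HSW k g -> num_branches g k (S r') -> exists m, Step k r' g m.
Proof.
  intros Hg [a [A0 [Ai [Ar An]]]].
  pose proof Hg as [[Lg [Og [Ng Ag]]] Yg].
  set (m := a 1%nat).
  assert (Hm : last_argmax g k 0 m) by (specialize (Ai 1%nat ltac:(lia)); simpl in Ai; rewrite A0 in Ai; exact Ai).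
  assert (Hk : (0 < k)%nat) by (specialize (An 0%nat ltac:(lia)); lia).
  destruct Hm as [Hm1 [Hm2 Hm3]].
  assert (Hm0 : (1 <= m)%nat).
  { destruct (Nat.eq_dec m 0) as [E|E]; [|lia]. exfalso.
    specialize (Hm2 1%nat ltac:(lia)). specialize (Yg 1%nat ltac:(lia)). rewrite E, Og in Hm2. simpl in Hm2. lia. }
  assert (Mono : forall i, (1 <= i <= S r')%nat -> (m <= a i <= k)%nat).
  { intros i Hi. induction i as [|i IH]. lia.
    destruct (Nat.eq_dec i 0) as [->|Hi0]. unfold m; lia.
    specialize (IH ltac:(lia)). specialize (Ai (S i) Hi). simpl in Ai.
    destruct (Nat.odd (S i)); destruct Ai as [Ai _]; lia. }
  exists m. split; [lia|split; [|split]].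
  - split; [split; [split; [|split; [|split]]|]|].
    + apply mk_length.
    + rewrite pt_mk by lia. exact Og.
    + apply mk_NoDup. intros i j Hi Hj E. rewrite NoDup_pt in Ng. apply Ng; auto; lia.
    + intros t Ht. rewrite !pt_mk by lia. apply Ag; lia.
    + intros t Ht. rewrite pt_mk by lia. apply Yg; lia.
    + intros t Ht. rewrite !pt_mk by lia. apply Hm2; lia.
  - split; [split; [|split; [|split]]|].
    + unfold rest; apply mk_length.
    + rewrite pt_rest by lia. rewrite Nat.add_0_r. unfold refl. f_equal; lia.
    + apply mk_NoDup. intros i j Hi Hj E. apply refl_inj in E. rewrite NoDup_pt in Ng.
      assert (m + i = m + j)%nat by (apply Ng; auto; lia). lia.
    + intros t Ht. rewrite !pt_rest by lia. apply adj_refl. replace (m + S t)%nat with (S (m + t)) by lia. apply Ag; lia.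
    + intros t Ht. rewrite pt_rest by lia. rewrite yc_refl. specialize (Hm3 (m + t)%nat ltac:(lia)). lia.
  - exists (fun i => (a (S i) - m)%nat). split; [unfold m; lia|split; [|split]].
    + intros i Hi. specialize (Ai (S i) ltac:(lia)). simpl pred in Ai |- *.
      replace (S (Nat.pred i)) with i by lia.
      replace (a (S i) - m)%nat with (a (S i) - m)%nat by reflexivity.
      rewrite Nat.odd_succ, <- Nat.negb_odd in Ai.
      assert (Mi := Mono i ltac:(lia)).
      destruct (Nat.odd i); simpl in Ai.
      * apply min_to_max; [lia|exact Ai].
      * apply max_to_min; [lia|exact Ai].
    + rewrite Ar. reflexivity.
    + intros i Hi E. specialize (An (S i) ltac:(lia)). assert (Mi := Mono (S i) ltac:(lia)). lia.
Qed.

Lemma rest_inj g g' m k : (m <= k)%nat -> length g = S k -> length g' = S k ->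
  mk (pt g) m = mk (pt g') m -> rest g m k = rest g' m k -> g = g'.
Proof.
  intros Hm L1 L2 E1 E2. apply walk_ext; [congruence|]. intros t Ht.
  assert (P1 : forall s, (s <= m)%nat -> pt g s = pt g' s).
  { intros s Hs. rewrite <- (pt_mk (pt g) m s), <- (pt_mk (pt g') m s) by auto. rewrite E1; auto. }
  destruct (Nat.le_gt_cases t m). auto.
  assert (H2 : pt (rest g m k) (t - m) = pt (rest g' m k) (t - m)) by (rewrite E2; auto).
  rewrite !pt_rest in H2 by lia. replace (m + (t - m))%nat with t in H2 by lia.
  rewrite (P1 m) in H2 by lia. apply refl_inj in H2. exact H2.
Qed.

Lemma count_branches (mu : R) (Hmu0 : 0 <= mu)
  (HB : forall m, (1 <= m)%nat -> Bnd (Bridge m) (mu ^ m)) :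
  forall r k, Bnd (fun g => HSW k g /\ num_branches g k r) (INR (S k) ^ r * mu ^ k).
Proof.
  induction r as [|r' IH]; intro k.
  - destruct k as [|k].
    + simpl. replace (1 * 1) with 1 by ring. apply (Bnd_single _ [(0%Z,0%Z)]).
      intros g [[[L [O _]] _] _]. destruct g as [|p [|q g]]; simpl in L; try lia.
      unfold pt in O; simpl in O. subst; reflexivity.
    + eapply Bnd_weaken. apply Bnd_empty. intros g [_ [a [A0 [_ [Ar _]]]]]. congruence.
      rewrite pow_O, Rmult_1_l. apply pow_le; auto.
  - assert (Hpos : forall j, 0 <= INR (S k) ^ j) by (intro; apply pow_le; apply pos_INR).
    replace (INR (S k) ^ S r' * mu ^ k) with (INR (S k) * (INR (S k) ^ r' * mu ^ k)) by (simpl; ring).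
    apply (Bnd_fiber _ (Step k r')).
    + apply Rmult_le_pos; auto. apply pow_le; auto.
    + intros g [H1 H2]. apply branch_step; auto.
    + apply Bnd_lt. intros m [g [_ [Hm _]]]. lia.
    + intro m. destruct (le_lt_dec 1 m) as [Hm1|Hm1]; [destruct (le_lt_dec m k) as [Hmk|Hmk]|].
      2,3: eapply Bnd_weaken; [apply Bnd_empty; intros g [_ [Hm _]]; lia|apply Rmult_le_pos; auto; apply pow_le; auto].
      replace (INR (S k) ^ r' * mu ^ k) with (mu ^ m * (INR (S k) ^ r' * mu ^ (k - m)) ).
      2:{ rewrite Rmult_comm, Rmult_assoc, <- pow_add. f_equal. f_equal. lia. }
      eapply Bnd_weaken.
      2:{ apply Rmult_le_compat_l. apply pow_le; auto. apply Rmult_le_compat_r. apply pow_le; auto.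
          apply pow_incr. split. apply pos_INR. apply le_INR. instantiate (1 := S (k - m)). lia. }
      apply (Bnd_fiber _ (fun g b => b = mk (pt g) m)).
      * apply Rmult_le_pos; apply pow_le; auto. apply pos_INR.
      * intros g _. eauto.
      * eapply Bnd_sub; [|apply (HB m Hm1)]. intros b [g [[_ [_ [Hb _]]] ->]]. exact Hb.
      * intro b. apply (Bnd_inj _ (fun g => HSW (k - m) g /\ num_branches g (k - m) r') (fun g => rest g m k)); [| |apply (IH (k - m)%nat)].
        -- intros g [[_ [_ [_ [H3 H4]]]] _]. auto.
        -- intros g g' [[[[[L1 _] _] _] _] E1] [[[[[L2 _] _] _] [_ [_ [_ _]]]] E2] E.
           apply (rest_inj g g' m k); auto; congruence.
Qed.

Lemma exp_INR n : exp (INR n) = exp 1 ^ n.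
Proof. induction n as [|n IH]. simpl; apply exp_0.
  rewrite S_INR, exp_plus, IH. simpl; ring. Qed.

Lemma exp14 : exp 14 <= 5000000.
Proof.
  replace 14 with (INR 14) by (simpl; ring). rewrite exp_INR.
  apply Rle_trans with (3 ^ 14). apply pow_incr. split. left; apply exp_pos. apply exp_le_3.
  simpl. lra.
Qed.

Theorem mainTheorem9 (eps : R) (Heps : 0 < eps < 1/2)
  (c : nat -> nat) (Hc : forall n, IsCard (SAW n) (c n))
  (mu : R) (Hmu : Un_cv (fun n => Rpower (INR (c n)) (/ INR n)) mu) :
  exists N : nat, forall n k : nat, (N <= n)%nat -> (k <= n)%nat ->
    forall L : list (list point), NoDup L ->
      (forall g, In g L -> FewBranchHSW eps n k g) ->
      INR (length L) <= exp (8 * Rpower (INR n) (1/2 - eps) * ln (INR n)) * mu ^ k.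
Proof.
  exists (Z.to_nat 5000000). intros n k HN Hk L H1 H2.
  assert (Hmu0 := mu_nonneg c mu Hmu).
  assert (Hn : 5000000 <= INR n).
  { apply le_INR in HN. rewrite INR_IZR_INZ, Z2Nat.id in HN by lia. exact HN. }
  set (x := Rpower (INR n) (1/2 - eps)).
  assert (Hx : 0 < x) by apply Rpower_pos.
  set (L0 := ln (INR n)). set (L1 := ln (INR (S n))).
  assert (HL0 : 14 <= L0).
  { unfold L0. rewrite <- (ln_exp 14). apply ln_le'. apply exp_pos. pose proof exp14; lra. }
  assert (HL1 : L1 <= L0 + 1).
  { unfold L1, L0. replace (ln (INR n) + 1) with (ln (INR n * exp 1))
      by (rewrite ln_mult, ln_exp; [reflexivity|lra|apply exp_pos]).
    apply ln_le'. apply lt_0_INR; lia. rewrite S_INR. pose proof (exp_ineq1_le 1). nra. }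
  assert (HL1p : 0 <= L1).
  { unfold L1. rewrite <- ln_1. apply ln_le'. lra. rewrite S_INR; pose proof (pos_INR n); lra. }
  set (M := Z.to_nat (up (7 * x))).
  assert (HM : INR M <= 7 * x + 1 /\ 7 * x < INR M).
  { destruct (archimed (7 * x)) as [A1 A2]. unfold M.
    assert (0 <= up (7 * x))%Z. { apply le_IZR. lra. }
    rewrite INR_IZR_INZ, Z2Nat.id by lia. lra. }
  set (B2 := exp (7 * x * L1) * mu ^ k).
  assert (HB2 : 0 <= B2) by (apply Rmult_le_pos; [left; apply exp_pos|apply pow_le; auto]).
  assert (Main : INR (length L) <= INR M * B2).
  { apply (Bnd_fiber (FewBranchHSW eps n k)
      (fun g r => HSW k g /\ num_branches g k r /\ INR r < 7 * x)); auto.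
    - intros g [Hg [r [Hr1 Hr2]]]. exists r. auto.
    - apply Bnd_lt. intros r [g [_ [_ [_ Hr]]]].
      apply INR_lt. lra.
    - intro r. destruct (Rlt_le_dec (INR r) (7 * x)) as [Hr|Hr].
      + eapply Bnd_weaken; [eapply Bnd_sub; [|apply (count_branches mu Hmu0 (bridge_bound c Hc mu Hmu) r k)]|].
        * intros g [_ [A [B _]]]. auto.
        * unfold B2. apply Rmult_le_compat_r. apply pow_le; auto.
          apply Rle_trans with (INR (S n) ^ r).
          apply pow_incr. split. apply pos_INR. apply le_INR. lia.
          rewrite <- Rpower_pow by (apply lt_0_INR; lia). unfold Rpower. apply exp_le'.
          fold L1. apply Rmult_le_compat_r; lra.
      + eapply Bnd_weaken; [apply Bnd_empty|exact HB2]. intros g [_ [_ [_ H]]]. lra. }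
  eapply Rle_trans; [exact Main|]. unfold B2. rewrite <- Rmult_assoc.
  apply Rmult_le_compat_r. apply pow_le; auto. fold x. fold L0.
  apply Rle_trans with (exp (7 * x) * exp (7 * x * L1)).
  - apply Rmult_le_compat_r. left; apply exp_pos. pose proof (exp_ineq1_le (7 * x)). lra.
  - rewrite <- exp_plus. apply exp_le'. nra.
Qed.
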